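(* Let $C$ be a finite, balanced configuration of height $h$ and type $(n_0,\ldots,n_h)$ (with $n_0=n_h=1$). Then $$F_{h,1}=-F_{0,1}=-F_C,\qquad (p_{h,1}-p_{0,1})F_C=\sum_{k=1}^h\frac{1}{n_k}.$$ In particular, the residual force $F_C$ never vanishes.
   Context: Let $h$ be a positive integer and $(n_0,\ldots,n_h)$ positive integers with $n_0=n_h=1$. A finite configuration of type $(n_0,\ldots,n_h)$ is a collection of complex numbers $(p_{k,i})_{0\le k\le h,1\le i\le n_k}$ such that, for each $k$, the points $p_{k,i}$ and $p_{k\pm1,j}$ are pairwise distinct. Set $c_k=1/n_k$ and use the convention $n_{-1}=n_{h+1}=0$ (empty sums). The forces are $$F_{k,i}=2\sum_{j\neq i}\frac{c_k^2}{p_{k,i}-p_{k,j}}-\sum_{j=1}^{n_{k+1}}\frac{c_kc_{k+1}}{p_{k,i}-p_{k+1,j}}-\sum_{j=1}^{n_{k-1}}\frac{c_kc_{k-1}}{p_{k,i}-p_{k-1,j}}$$ for $0\le k\le h$, $1\le i\le n_k$. The configuration is balanced if $F_{k,i}=0$ for $1\le k\le h-1$ and all $i$ (no condition on $F_{0,1}$, $F_{h,1}$). The residual force is $F_C=F_{0,1}$. *)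

(* Defs.v *)
From HB Require Import structures.
From mathcomp Require Import all_boot all_order all_algebra.
From mathcomp Require Import reals complex.
Set Implicit Arguments. Unset Strict Implicit. Unset Printing Implicit Defensive.
Import Order.TTheory GRing.Theory Num.Theory.
Local Open Scope ring_scope.

(* A configuration of height h and type (n 0, ..., n h) is given by
   p k i : R[i] for 0 <= k <= h and 0 <= i < n k (0-based point index;
   p k i corresponds to the paper's p_{k,i+1}). *)

Definition cw (n : nat -> nat) (k : nat) {C : fieldType} : C := (n k)%:R^-1.

(* The force F_{k,i}, with the convention n_{-1} = n_{h+1} = 0 (empty sums). *)
Definition force {C : fieldType} (h : nat) (n : nat -> nat)
  (p : nat -> nat -> C) (k i : nat) : C :=
  2 * (\sum_(j < n k | (j : nat) != i) (cw n k) ^+ 2 / (p k i - p k j))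
  - (if (k < h)%N then
       \sum_(j < n k.+1) cw n k * cw n k.+1 / (p k i - p k.+1 j)
     else 0)
  - (if (0 < k)%N then
       \sum_(j < n k.-1) cw n k * cw n k.-1 / (p k i - p k.-1 j)
     else 0).

Definition is_config {C : fieldType} (h : nat) (n : nat -> nat)
  (p : nat -> nat -> C) : Prop :=
  [/\ (0 < h)%N, (forall k, (k <= h)%N -> (0 < n k)%N), n 0%N = 1%N /\ n h = 1%N,
      (forall k i j, (k <= h)%N -> (i < n k)%N -> (j < n k)%N -> i <> j ->
         p k i != p k j)
    & (forall k i j, (k < h)%N -> (i < n k)%N -> (j < n k.+1)%N ->
         p k i != p k.+1 j)].

Definition balanced {C : fieldType} (h : nat) (n : nat -> nat)
  (p : nat -> nat -> C) : Prop :=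
  forall k i, (1 <= k)%N -> (k <= h.-1)%N -> (i < n k)%N -> force h n p k i = 0.

Definition residual_force {C : fieldType} (h : nat) (n : nat -> nat)
  (p : nat -> nat -> C) : C := force h n p 0%N 0%N.

(* Main.v *)
Require Import Defs.
From HB Require Import structures.
From mathcomp Require Import all_boot all_order all_algebra.
From mathcomp Require Import reals complex.
From mathcomp Require Import ring.
Import Order.TTheory GRing.Theory Num.Theory.
Local Open Scope ring_scope.

Lemma drop_diag (C : numFieldType) m (f : 'I_m -> 'I_m -> C) :
  (forall i, f i i = 0) ->
  \sum_(i < m) \sum_(j < m | (j:nat) != i) f i j = \sum_(i < m) \sum_(j < m) f i j.
Proof.
move=> H; apply: eq_bigr => i _.
rewrite [RHS](bigD1 i) //= H add0r; by apply: eq_bigl.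
Qed.

Lemma intra0 (C : numFieldType) (m : nat) (q : nat -> C) (a : C) :
  \sum_(i < m) \sum_(j < m | (j:nat) != i) a / (q i - q j) = 0.
Proof.
rewrite drop_diag; last by move=> i; rewrite subrr invr0 mulr0.
set S := \sum_i _.
have E : S = - S.
  rewrite {2}/S exchange_big -sumrN; apply: eq_bigr => i _.
  rewrite -sumrN; apply: eq_bigr => j _.
  by rewrite -[q j - q i]opprB invrN mulrN opprK.
move/eqP: E; rewrite -subr_eq0 opprK -mulr2n mulrn_eq0 /=.
by move/eqP.
Qed.

Lemma intraW (C : numFieldType) (m : nat) (q : nat -> C) (a : C) :
  (forall i j, (i < m)%N -> (j < m)%N -> i <> j -> q i != q j) ->
  2 * \sum_(i < m) q i * \sum_(j < m | (j:nat) != i) a / (q i - q j)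
  = a * (m%:R * m%:R - m%:R).
Proof.
move=> Hd.
under eq_bigr do rewrite mulr_sumr.
rewrite drop_diag; last by move=> i; rewrite subrr invr0 !mulr0.
set S := \sum_i _.
have E : S + S = \sum_(i < m) \sum_(j < m) (a - (if j == i then a else 0)).
  rewrite {2}/S exchange_big -big_split; apply: eq_bigr => i _ /=.
  rewrite -big_split; apply: eq_bigr => j _ /=.
  case: eqP => [->|/eqP hij]; first by rewrite subrr invr0 !mulr0 addr0 subrr.
  have hd : q i - q j != 0.
    rewrite subr_eq0; apply: Hd => //; by move=> e; move: hij; rewrite -val_eqE /= e eqxx.
  rewrite subr0 -[q j - q i]opprB invrN mulrN; by field.
rewrite mulr2n mulrDl mul1r E.
under eq_bigr do rewrite sumrB -big_mkcond big_pred1_eq sumr_const card_ord.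
rewrite sumr_const card_ord.
by rewrite -[a *+ m]mulr_natr -[(_ - _) *+ m]mulr_natr; ring.
Qed.

Lemma cross0 (C : numFieldType) m m' (q r : nat -> C) (a b : C) : a = b ->
  \sum_(j < m') \sum_(i < m) b / (r j - q i) = - \sum_(i < m) \sum_(j < m') a / (q i - r j).
Proof.
move=> ->; rewrite exchange_big -sumrN; apply: eq_bigr => i _.
rewrite -sumrN; apply: eq_bigr => j _.
by rewrite -[r j - q i]opprB invrN mulrN.
Qed.

Lemma crossW (C : numFieldType) m m' (q r : nat -> C) (a b : C) : a = b ->
  (forall i j, (i < m)%N -> (j < m')%N -> q i != r j) ->
  \sum_(i < m) q i * \sum_(j < m') a / (q i - r j)
  + \sum_(j < m') r j * \sum_(i < m) b / (r j - q i) = a * (m%:R * m'%:R).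
Proof.
move=> -> Hd.
under eq_bigr do rewrite mulr_sumr.
under [X in _ + X]eq_bigr do rewrite mulr_sumr.
rewrite [X in _ + X]exchange_big -big_split.
rewrite (eq_bigr (fun _ => b *+ m')).
  by rewrite sumr_const card_ord -[b *+ m']mulr_natr -[(_ * _) *+ m]mulr_natr; ring.
move=> i _ /=; rewrite -big_split (eq_bigr (fun _ => b)) ?sumr_const ?card_ord // => j _ /=.
have hd : q i - r j != 0 by rewrite subr_eq0; apply: Hd.
rewrite -[r j - q i]opprB invrN mulrN.
by field.
Qed.

Lemma sum_ifA (C : numFieldType) (h : nat) (f : nat -> C) :
  \sum_(0 <= k < h.+1) (if (k < h)%N then f k else 0) = \sum_(0 <= k < h) f k.
Proof.
rewrite big_nat_recr //= ltnn addr0 big_nat_cond [RHS]big_nat_cond.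
by apply: eq_bigr => k /andP[/andP[_ ->] _].
Qed.

Lemma sum_ifB (C : numFieldType) (h : nat) (g : nat -> C) :
  \sum_(0 <= k < h.+1) (if (0 < k)%N then g k else 0) = \sum_(0 <= k < h) g k.+1.
Proof. by rewrite big_nat_recl //= add0r. Qed.
Section Main.
Variables (R : realType) (h : nat) (n : nat -> nat) (p : nat -> nat -> R[i]).
Local Notation C := (R[i]).

Definition U k : C := \sum_(i < n k) \sum_(j < n k.+1) cw n k * cw n k.+1 / (p k i - p k.+1 j).
Definition D k : C := \sum_(i < n k) \sum_(j < n k.-1) cw n k * cw n k.-1 / (p k i - p k.-1 j).
Definition UW k : C := \sum_(i < n k) p k i * \sum_(j < n k.+1) cw n k * cw n k.+1 / (p k i - p k.+1 j).
Definition DW k : C := \sum_(i < n k) p k i * \sum_(j < n k.-1) cw n k * cw n k.-1 / (p k i - p k.-1 j).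

Lemma row_sum k : \sum_(i < n k) force h n p k i
  = - (if (k < h)%N then U k else 0) - (if (0 < k)%N then D k else 0).
Proof.
rewrite /force sumrB sumrB -mulr_sumr intra0 mulr0 sub0r.
by congr (- _ - _); case: ifP => _ //; rewrite big1.
Qed.

Lemma row_wsum k : (0 < n k)%N ->
  (forall i j, (i < n k)%N -> (j < n k)%N -> i <> j -> p k i != p k j) ->
  \sum_(i < n k) p k i * force h n p k i
  = (1 - cw n k) - (if (k < h)%N then UW k else 0) - (if (0 < k)%N then DW k else 0).
Proof.
move=> hn hd.
under eq_bigr do rewrite /force !mulrBr mulrCA.
rewrite sumrB sumrB -mulr_sumr intraW //.
congr (_ - _ - _).
  have : (n k)%:R != 0 :> C by rewrite pnatr_eq0 -lt0n.
  by rewrite /cw => ?; field.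
  by case: ifP => _ //; rewrite big1 // => i _; rewrite mulr0.
by case: ifP => _ //; rewrite big1 // => i _; rewrite mulr0.
Qed.

End Main.
Arguments U {R}. Arguments D {R}. Arguments UW {R}. Arguments DW {R}.
Arguments row_sum {R}. Arguments row_wsum {R}.
Theorem proposition3p1 (R : realType) (h : nat) (n : nat -> nat)
  (p : nat -> nat -> R[i]) :
  is_config h n p -> balanced h n p ->
  [/\ force h n p h 0%N = - residual_force h n p,
      (p h 0%N - p 0%N 0%N) * residual_force h n p
        = \sum_(1 <= k < h.+1) (n k)%:R^-1
    & residual_force h n p != 0].
Proof.
case=> hpos npos [n0 nh] dist adj bal.
have DU k : D n p k.+1 = - U n p k.
  by rewrite /D /U /=; apply: cross0; rewrite mulrC.
have DUW k : (k < h)%N -> UW n p k + DW n p k.+1 = 1.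
  move=> hk; rewrite /UW /DW /=. rewrite (crossW _ _ _ _ _ _ _ (mulrC _ _)); last first. by move=> i j hi hj; apply: adj. 
  have h1 : (n k)%:R != 0 :> R[i] by rewrite pnatr_eq0 -lt0n; apply: npos; apply: ltnW.
  have h2 : (n k.+1)%:R != 0 :> R[i] by rewrite pnatr_eq0 -lt0n npos.
  by rewrite /cw; field; rewrite h1 h2.
case: h hpos npos nh dist adj bal DUW => // h' _ npos nh dist adj bal DUW.
set F := residual_force _ _ _.
have mid : forall G : nat -> R[i], (forall k, (1 <= k)%N -> (k <= h')%N -> G k = 0) ->
   \sum_(0 <= k < h'.+2) G k = G 0%N + G h'.+1.
  move=> G HG; rewrite big_nat_recl // big_nat_recr //= big_nat big1 ?add0r //.
  by move=> k /andP[_ hk]; apply: HG.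
have S0 : \sum_(0 <= k < h'.+2) \sum_(i < n k) force h'.+1 n p k i = 0.
  under eq_bigr do rewrite row_sum.
  rewrite sumrB !sumrN sum_ifA sum_ifB.
  under [X in _ - X]eq_bigr do rewrite DU.
  by rewrite sumrN opprK addNr.
have F1 : force h'.+1 n p h'.+1 0 = - F.
  move: S0; rewrite mid.
    by rewrite n0 nh !big_ord1 /F /residual_force; move/eqP; rewrite addrC addr_eq0 => /eqP.
  by move=> k hk1 hk2; rewrite big1 // => i _; apply: bal.
have S1 : \sum_(0 <= k < h'.+2) \sum_(i < n k) p k i * force h'.+1 n p k i
    = \sum_(0 <= k < h'.+2) (1 - cw n k) - h'.+1%:R.
  transitivity (\sum_(0 <= k < h'.+2) ((1 - cw n k) - (if (k < h'.+1)%N then UW n p k else 0)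
     - (if (0 < k)%N then DW n p k else 0))).
    apply: eq_big_nat => k /andP[_ hk]; apply: row_wsum; first exact: npos.
    by move=> i j; apply: dist.
  rewrite !sumrB sum_ifA sum_ifB -addrA -opprD -big_split /=.
  congr (_ - _).
  rewrite (eq_big_nat _ _ (F2 := fun _ => 1)) ?sumr_const_nat ?subn0 // => k /andP[_ hk].
move: S1; rewrite mid; last first.
  by move=> k hk1 hk2; rewrite big1 // => i _; rewrite bal ?mulr0.
rewrite n0 nh !big_ord1 F1 -/F.
rewrite sumrB sumr_const_nat subn0 big_nat_recl // /cw n0 invr1.
rewrite [\sum_(1 <= k < h'.+2) _]big_add1 /=.
set T := \sum_(0 <= k < h'.+1) _ => E.
have E2 : (p h'.+1 0%N - p 0%N 0%N) * F = T.
  have -> : T = - (p 0%N 0%N * F + p h'.+1 0%N * - F).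
    by rewrite E -[h'.+2]addn1 natrD; ring.
  ring.
have Tpos : 0 < T.
  rewrite /T big_nat_recl //; apply: (@lt_le_trans _ _ ((n 1%N)%:R^-1)).
    by rewrite invr_gt0 ltr0n npos.
  by rewrite lerDl sumr_ge0 // => k _; rewrite invr_ge0 ler0n.
split => //.
by apply/eqP => F0; move: Tpos; rewrite -E2 F0 mulr0 ltxx.
Qed.
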